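(* Let $S$ be an $E$-unitary inverse semigroup, $A$ a semilattice of groups and $\Lambda=(\alpha,\lambda,f)$ a Sieben twisted $S$-module structure on $A$. Define, for $x\in\mathcal G(S)$: $D_x=\bigsqcup_{s\in x}A_{\alpha(ss^{-1})}$; $\theta_x:D_{x^{-1}}\to D_x$ by $\theta_x(a)=\lambda_s(a)$, where $s\in x$ is the unique element with $\alpha(s^{-1}s)=aa^{-1}$; and for $x,y\in\mathcal G(S)$ the pair $w_{x,y}$ of maps on $D_xD_{xy}$ by $w_{x,y}a=f(s,s^{-1}t)a$, $aw_{x,y}=af(s,s^{-1}t)$, where $s\in x$, $t\in xy$ are the unique elements with $\alpha(ss^{-1})=\alpha(tt^{-1})=aa^{-1}$. Then $\Theta=(\theta,w)$ is a twisted partial action of $\mathcal G(S)$ on $A$. Moreover, the crossed products $A*_\Lambda S$ and $A*_\Theta\mathcal G(S)$ are equivalent as extensions of $A$ by $\mathcal G(S)$.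
   Context: A semilattice of groups is an inverse semigroup $A$ with central idempotents; $A_e=\{a: aa^{-1}=a^{-1}a=e\}$. $\sigma$ is the minimum group congruence on $S$, $\mathcal G(S)=S/\sigma$ (elements are $\sigma$-classes), $\sigma^\natural$ the quotient map; $E$-unitary means $e\le s$, $e\in E(S)$ imply $s\in E(S)$. Relatively invertible endomorphism $\varphi$ of $A$: there are $\bar\varphi\in\mathrm{End}\,A$, $e_\varphi\in E(A)$ with $\bar\varphi\varphi(a)=e_\varphi a$, $\varphi\bar\varphi(a)=\varphi(e_\varphi)a$, $e_\varphi$ the identity of $\bar\varphi(A)$, $\varphi(e_\varphi)$ the identity of $\varphi(A)$. A twisted $S$-module structure is $(\alpha,\lambda,f)$ with $\alpha:E(S)\to E(A)$ an isomorphism, $\lambda_s$ relatively invertible endomorphisms, $f(s,t)\in A_{\alpha(stt^{-1}s^{-1})}$, and (i) $\lambda_e(a)=\alpha(e)a$; (ii) $\lambda_s(\alpha(e))=\alpha(ses^{-1})$; (iii) $\lambda_s\lambda_t(a)=f(s,t)\lambda_{st}(a)f(s,t)^{-1}$; (iv) $f(se,e)=\alpha(ses^{-1})$, $f(e,es)=\alpha(ess^{-1})$; (v) $\lambda_s(f(t,u))f(s,tu)=f(s,t)f(st,u)$; Sieben: additionally $f(s,e)=\alpha(ses^{-1})$, $f(e,s)=\alpha(ess^{-1})$ ($e\in E(S)$). Crossed product $A*_\Lambda S=\{a\delta_s: aa^{-1}=\alpha(ss^{-1})\}$ with $a\delta_s\cdot b\delta_t=a\lambda_s(b)f(s,t)\delta_{st}$,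 regarded as an extension of $A$ by $\mathcal G(S)$ via $a\mapsto a\delta_{\alpha^{-1}(aa^{-1})}$ and $a\delta_s\mapsto\sigma^\natural(s)$. Multipliers of a semigroup $T$: pairs $(L,R)$ of maps with $L(st)=L(s)t$, $R(st)=sR(t)$, $sL(t)=R(s)t$, written $ws=L(s)$, $sw=R(s)$; monoid $\mathcal M(T)$, unit group $\mathcal U(\mathcal M(T))$. A twisted partial action of a group $H$ on $A$ is $(\theta,w)$ with isomorphisms $\theta_x:D_{x^{-1}}\to D_x$ of nonempty ideals and $w_{x,y}\in\mathcal U(\mathcal M(D_xD_{xy}))$, such that (i) $D_x^2=D_x$, $D_xD_y=D_yD_x$; (ii) $D_1=A$, $\theta_1=\mathrm{id}$; (iii) $\theta_x(D_{x^{-1}}D_y)=D_xD_{xy}$; (iv) $\theta_x\theta_y(s)=w_{x,y}\theta_{xy}(s)w_{x,y}^{-1}$ on $D_{y^{-1}}D_{y^{-1}x^{-1}}$; (v) $w_{1,x}=w_{x,1}$ = identity of $D_x$; (vi) $\theta_x(sw_{y,z})w_{x,yz}=\theta_x(s)w_{x,y}w_{xy,z}$ on $D_{x^{-1}}D_yD_{yz}$. Crossed product $A*_\Theta H=\{a\delta_x: a\in D_x\}$ with $a\delta_x\cdot b\delta_y=\theta_x(\theta_x^{-1}(a)b)w_{x,y}\delta_{xy}$, an extension of $A$ by $H$ via $a\mapsto a\delta_1$, $a\delta_x\mapsto x$. Extensions $(U,i,j)$, $(U',i',j')$ of $A$ by a group (i.e. $i$ mono, $j$ epi, $i(A)=j^{-1}(1)$)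 are equivalent if there is an isomorphism $\mu:U\to U'$ with $\mu\circ i=i'$, $j'\circ\mu=j$. *)

(* Defs.v *)
Set Implicit Arguments.
Unset Strict Implicit.

Record InvSemigroup := {
  is_car :> Type;
  is_mul : is_car -> is_car -> is_car;
  is_inv : is_car -> is_car;
  is_assoc : forall a b c, is_mul a (is_mul b c) = is_mul (is_mul a b) c;
  is_inv_l : forall a, is_mul (is_mul a (is_inv a)) a = a;
  is_inv_r : forall a, is_mul (is_mul (is_inv a) a) (is_inv a) = is_inv a;
  is_inv_uniq : forall a b, is_mul (is_mul a b) a = a ->
                            is_mul (is_mul b a) b = b -> b = is_inv a }.

Declare Scope isg_scope.
Delimit Scope isg_scope with isg.
Notation "x ** y" := (is_mul x y) (at level 40, left associativity) : isg_scope.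
Notation "x ^-1" := (is_inv x) (at level 3, left associativity) : isg_scope.
Local Open Scope isg_scope.

Section InvSemigroupDefs.
Variable S : InvSemigroup.

Definition idem (e : S) : Prop := e ** e = e.

Definition nat_le (s t : S) : Prop := exists e, idem e /\ s = e ** t.

Definition E_unitary : Prop :=
  forall e s, idem e -> nat_le e s -> idem s.

(* semilattice of groups: inverse semigroup with central idempotents *)
Definition semilattice_of_groups : Prop :=
  forall e a, idem e -> e ** a = a ** e.

Definition in_Ae (e a : S) : Prop := a ** a^-1 = e /\ a^-1 ** a = e.

Definition endo (phi : S -> S) : Prop :=
  forall a b, phi (a ** b) = phi a ** phi b.

Definition identity_of_image (phi : S -> S) (e : S) : Prop :=
  (exists c, phi c = e) /\ forall b, e ** phi b = phi b /\ phi b ** e = phi b.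

Definition rel_invertible (phi : S -> S) : Prop :=
  endo phi /\
  exists (phib : S -> S) (e : S),
    endo phib /\ idem e /\
    (forall a, phib (phi a) = e ** a) /\
    (forall a, phi (phib a) = phi e ** a) /\
    identity_of_image phib e /\
    identity_of_image phi (phi e).

Definition setmul (P Q : S -> Prop) : S -> Prop :=
  fun c => exists a b, P a /\ Q b /\ c = a ** b.

Definition set_eq (P Q : S -> Prop) : Prop := forall a, P a <-> Q a.

Definition is_ideal (P : S -> Prop) : Prop :=
  forall a b, P a -> P (a ** b) /\ P (b ** a).

End InvSemigroupDefs.

Record Group := {
  g_car :> Type;
  g_mul : g_car -> g_car -> g_car;
  g_one : g_car;
  g_inv : g_car -> g_car;
  g_assoc : forall a b c, g_mul a (g_mul b c) = g_mul (g_mul a b) c;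
  g_mul1l : forall a, g_mul g_one a = a;
  g_mul1r : forall a, g_mul a g_one = a;
  g_mulVl : forall a, g_mul (g_inv a) a = g_one;
  g_mulVr : forall a, g_mul a (g_inv a) = g_one }.

Arguments g_mul {_} _ _.
Arguments g_one {_}.
Arguments g_inv {_} _.

Definition hom_to_group (S : InvSemigroup) (K : Group) (p : S -> K) : Prop :=
  forall s t, p (s ** t) = g_mul (p s) (p t).

(* q : S -> H is (up to isomorphism of the target) the quotient map
   sigma^natural : S -> G(S) = S/sigma, sigma the minimum group congruence:
   q is a surjective homomorphism onto a group, and its kernel congruence is
   contained in the kernel of every homomorphism of S into a group (i.e. in
   every group congruence). Then H = G(S) and q = sigma^natural, and
   "s in x" means q s = x. *)
Definition min_group_quotient (S : InvSemigroup) (H : Group) (q : S -> H) : Prop :=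
  hom_to_group q /\
  (forall x : H, exists s, q s = x) /\
  (forall (K : Group) (p : S -> K), hom_to_group p ->
     forall s t, q s = q t -> p s = p t).

Section TwistedModule.
Variables (S A : InvSemigroup).
(* alpha : E(S) -> E(A) is represented by a function S -> A whose values are
   only ever used (and only constrained) on idempotents. *)
Variables (alpha : S -> A) (lam : S -> A -> A) (f : S -> S -> A).

Definition alpha_iso : Prop :=
  (forall e, idem e -> idem (alpha e)) /\
  (forall e g, idem e -> idem g -> alpha (e ** g) = alpha e ** alpha g) /\
  (forall e g, idem e -> idem g -> alpha e = alpha g -> e = g) /\
  (forall g : A, idem g -> exists e, idem e /\ alpha e = g).

Definition twisted_module : Prop :=
  alpha_iso /\
  (forall s, rel_invertible (lam s)) /\
  (forall s t, in_Ae (alpha (s ** t ** t^-1 ** s^-1)) (f s t)) /\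
  (forall e a, idem e -> lam e a = alpha e ** a) /\
  (forall s e, idem e -> lam s (alpha e) = alpha (s ** e ** s^-1)) /\
  (forall s t a, lam s (lam t a) = f s t ** lam (s ** t) a ** (f s t)^-1) /\
  (forall s e, idem e -> f (s ** e) e = alpha (s ** e ** s^-1) /\
                         f e (e ** s) = alpha (e ** s ** s^-1)) /\
  (forall s t u, lam s (f t u) ** f s (t ** u) = f s t ** f (s ** t) u).

Definition sieben_twisted_module : Prop :=
  twisted_module /\
  (forall s e, idem e -> f s e = alpha (s ** e ** s^-1) /\
                         f e s = alpha (e ** s ** s^-1)).
End TwistedModule.

Section Multipliers.
Variable A : InvSemigroup.
(* A multiplier of the subsemigroup T (given as a predicate on A) is a pair
   (L,R) of maps T -> T; here L R : A -> A, only their restriction to T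
   matters.  w s = L s, s w = R s. *)
Definition multiplier (T : A -> Prop) (w : (A -> A) * (A -> A)) : Prop :=
  (forall s, T s -> T (fst w s) /\ T (snd w s)) /\
  (forall s t, T s -> T t ->
     fst w (s ** t) = fst w s ** t /\
     snd w (s ** t) = s ** snd w t /\
     s ** fst w t = snd w s ** t).

Definition mult_inverse (T : A -> Prop) (w w' : (A -> A) * (A -> A)) : Prop :=
  multiplier T w /\ multiplier T w' /\
  (forall s, T s -> fst w (fst w' s) = s /\ fst w' (fst w s) = s /\
                    snd w (snd w' s) = s /\ snd w' (snd w s) = s).

Definition mult_unit (T : A -> Prop) (w : (A -> A) * (A -> A)) : Prop :=
  exists w', mult_inverse T w w'.
End Multipliers.

Section TPA.
Variables (A : InvSemigroup) (H : Group).
Variables (D : H -> A -> Prop) (theta : H -> A -> A)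
          (w : H -> H -> (A -> A) * (A -> A)).

Definition twisted_partial_action : Prop :=
  (forall x, is_ideal (D x) /\ exists a, D x a) /\
  (forall x, (forall a, D (g_inv x) a -> D x (theta x a)) /\
             (forall a b, D (g_inv x) a -> D (g_inv x) b ->
                theta x a = theta x b -> a = b) /\
             (forall b, D x b -> exists a, D (g_inv x) a /\ theta x a = b) /\
             (forall a b, D (g_inv x) a -> D (g_inv x) b ->
                theta x (a ** b) = theta x a ** theta x b)) /\
  (forall x y, mult_unit (setmul (D x) (D (g_mul x y))) (w x y)) /\
  (forall x, set_eq (setmul (D x) (D x)) (D x)) /\
  (forall x y, set_eq (setmul (D x) (D y)) (setmul (D y) (D x))) /\
  (forall a, D g_one a) /\
  (forall a, theta g_one a = a) /\
  (forall x y, set_eq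
     (fun b => exists a, setmul (D (g_inv x)) (D y) a /\ theta x a = b)
     (setmul (D x) (D (g_mul x y)))) /\
  (forall x y w', mult_inverse (setmul (D x) (D (g_mul x y))) (w x y) w' ->
     forall s, setmul (D (g_inv y)) (D (g_mul (g_inv y) (g_inv x))) s ->
       theta x (theta y s) = snd w' (fst (w x y) (theta (g_mul x y) s))) /\
  (forall x a, D x a ->
     fst (w g_one x) a = a /\ snd (w g_one x) a = a /\
     fst (w x g_one) a = a /\ snd (w x g_one) a = a) /\
  (forall x y z s,
     setmul (setmul (D (g_inv x)) (D y)) (D (g_mul y z)) s ->
     snd (w x (g_mul y z)) (theta x (snd (w y z) s)) =
     snd (w (g_mul x y) z) (snd (w x y) (theta x s))).
End TPA.

(* An extension of A by the group H, presented as: a carrier predicate U on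
   an ambient type X, the graph M u v r (r = u v) of the multiplication of U,
   the map i : A -> X and the map j : X -> H. *)
Section Extensions.
Variables (A : InvSemigroup) (H : Group).

Definition is_extension (X : Type) (U : X -> Prop) (M : X -> X -> X -> Prop)
  (i : A -> X) (j : X -> H) : Prop :=
  (forall a, U (i a)) /\
  (forall a b, M (i a) (i b) (i (a ** b))) /\
  (forall a b, i a = i b -> a = b) /\
  (forall u v r, U u -> U v -> M u v r -> j r = g_mul (j u) (j v)) /\
  (forall x : H, exists u, U u /\ j u = x) /\
  (forall u, U u -> (j u = g_one <-> exists a, u = i a)).

Definition equivalent_extensions
  (X : Type) (U : X -> Prop) (M : X -> X -> X -> Prop) (i : A -> X) (j : X -> H)
  (X' : Type) (U' : X' -> Prop) (M' : X' -> X' -> X' -> Prop)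
  (i' : A -> X') (j' : X' -> H) : Prop :=
  is_extension U M i j /\ is_extension U' M' i' j' /\
  exists mu : X -> X',
    (forall u, U u -> U' (mu u)) /\
    (forall u v, U u -> U v -> mu u = mu v -> u = v) /\
    (forall u', U' u' -> exists u, U u /\ mu u = u') /\
    (forall u v r, U u -> U v -> M u v r -> M' (mu u) (mu v) (mu r)) /\
    (forall a, mu (i a) = i' a) /\
    (forall u, U u -> j' (mu u) = j u).
End Extensions.

Section Construction.
Variables (S A : InvSemigroup) (H : Group) (q : S -> H).
Variables (alpha : S -> A) (lam : S -> A -> A) (f : S -> S -> A).

Definition Dom (x : H) (a : A) : Prop :=
  exists s, q s = x /\ in_Ae (alpha (s ** s^-1)) a.

(* crossed product A *_Lambda S, as a subset of A * S *)
Definition cpL_car (u : A * S) : Prop :=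
  fst u ** (fst u)^-1 = alpha (snd u ** (snd u)^-1).

Definition cpL_mul (u v : A * S) : A * S :=
  (fst u ** lam (snd u) (fst v) ** f (snd u) (snd v), snd u ** snd v).

Definition cpL_rel (u v r : A * S) : Prop := r = cpL_mul u v.

(* i(a) = a delta_{alpha^-1(a a^-1)}, with alpha_inv an inverse of alpha on
   idempotents; j(a delta_s) = sigma^natural(s) *)
Definition cpL_i (alpha_inv : A -> S) (a : A) : A * S :=
  (a, alpha_inv (a ** a^-1)).
Definition cpL_j (u : A * S) : H := q (snd u).
End Construction.

Section CrossedTheta.
Variables (A : InvSemigroup) (H : Group).
Variables (D : H -> A -> Prop) (theta : H -> A -> A)
          (w : H -> H -> (A -> A) * (A -> A)).

(* crossed product A *_Theta H, as a subset of A * H *)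
Definition cpT_car (u : A * H) : Prop := D (snd u) (fst u).

(* a delta_x . b delta_y = theta_x(theta_x^-1(a) b) w_{x,y} delta_{xy};
   theta_x^-1(a) is the preimage a' in D_{x^-1} of a under theta_x *)
Definition cpT_rel (u v r : A * H) : Prop :=
  exists a', D (g_inv (snd u)) a' /\ theta (snd u) a' = fst u /\
    r = (snd (w (snd u) (snd v)) (theta (snd u) (a' ** fst v)),
         g_mul (snd u) (snd v)).

Definition cpT_i (a : A) : A * H := (a, g_one).
Definition cpT_j (u : A * H) : H := snd u.
End CrossedTheta.

(* Main.v *)
Require Import Defs.
From Stdlib Require Import Setoid.
Local Open Scope isg_scope.
Set Implicit Arguments.
Unset Strict Implicit.

Ltac asl := rewrite ?is_assoc.
Tactic Notation "regroup" constr(X) := transitivity X; [rewrite ?is_assoc; reflexivity|].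

Section IS.
Variable T : InvSemigroup.
Implicit Types a b c e g : T.

Lemma inv_l a : a ** a^-1 ** a = a. Proof. exact (is_inv_l a). Qed.
Lemma inv_r a : a^-1 ** a ** a^-1 = a^-1. Proof. exact (is_inv_r a). Qed.

Lemma inv_inv a : (a^-1)^-1 = a.
Proof. symmetry. apply is_inv_uniq. apply inv_r. apply inv_l. Qed.

Lemma idem_inv e : idem e -> e^-1 = e.
Proof. intro h. symmetry. apply is_inv_uniq; unfold idem in h; rewrite !h; auto. Qed.

Lemma idem_rr a : idem (a ** a^-1).
Proof. unfold idem. rewrite is_assoc, inv_l. reflexivity. Qed.
Lemma idem_ll a : idem (a^-1 ** a).
Proof. unfold idem. rewrite is_assoc, inv_r. reflexivity. Qed.

Lemma idem_mul_comm e g : idem e -> idem g -> idem (e ** g) /\ e ** g = g ** e.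
Proof.
  intros he hg.
  assert (key : forall e g, idem e -> idem g -> idem (e ** g)).
  { clear. intros e g he hg. set (x := (e ** g)^-1).
    assert (hx : g ** x ** e = x).
    { unfold x. apply is_inv_uniq.
      - regroup (e ** (g ** g) ** (e ** g)^-1 ** (e ** e) ** g).
        rewrite hg, he. regroup ((e ** g) ** (e ** g)^-1 ** (e ** g)). apply inv_l.
      - regroup (g ** ((e ** g)^-1 ** (e ** e) ** (g ** g) ** (e ** g)^-1) ** e).
        rewrite he, hg. regroup (g ** ((e ** g)^-1 ** (e ** g) ** (e ** g)^-1) ** e).
        rewrite inv_r. reflexivity. }
    assert (ix : idem x).
    { unfold idem. transitivity ((g ** x ** e) ** (g ** x ** e)). { rewrite hx; reflexivity. }
      regroup (g ** (x ** (e ** g) ** x) ** e). unfold x at 1 2 3. rewrite inv_r. exact hx. }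
    unfold idem. rewrite <- (inv_inv (e ** g)). fold x.
    rewrite (idem_inv ix). exact ix. }
  split. apply key; auto.
  assert (i1 := key e g he hg). assert (i2 := key g e hg he).
  transitivity ((e ** g)^-1). { symmetry; apply idem_inv; auto. }
  symmetry. apply is_inv_uniq; unfold idem in *.
  - regroup (e ** (g ** g) ** (e ** e) ** g). rewrite hg, he.
    regroup ((e ** g) ** (e ** g)). exact i1.
  - regroup (g ** (e ** e) ** (g ** g) ** e). rewrite hg, he.
    regroup ((g ** e) ** (g ** e)). exact i2.
Qed.

Lemma idem_mul e g : idem e -> idem g -> idem (e ** g).
Proof. intros; apply idem_mul_comm; auto. Qed.
Lemma idem_comm e g : idem e -> idem g -> e ** g = g ** e.
Proof. intros; apply idem_mul_comm; auto. Qed.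

Lemma inv_mul a b : (a ** b)^-1 = b^-1 ** a^-1.
Proof.
  symmetry. apply is_inv_uniq.
  - regroup (a ** ((b ** b^-1) ** (a^-1 ** a)) ** b).
    rewrite (idem_comm (idem_rr b) (idem_ll a)).
    transitivity ((a ** a^-1 ** a) ** (b ** b^-1 ** b)). { rewrite !is_assoc; reflexivity. }
    rewrite !inv_l. reflexivity.
  - regroup (b^-1 ** ((a^-1 ** a) ** (b ** b^-1)) ** a^-1).
    rewrite (idem_comm (idem_ll a) (idem_rr b)).
    transitivity ((b^-1 ** b ** b^-1) ** (a^-1 ** a ** a^-1)). { rewrite !is_assoc; reflexivity. }
    rewrite !inv_r. reflexivity.
Qed.

Lemma endo_inv (phi : T -> T) a : endo phi -> phi (a^-1) = (phi a)^-1.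
Proof.
  intro h. apply is_inv_uniq; rewrite <- !h. rewrite inv_l; auto. rewrite inv_r; auto.
Qed.

Lemma endo_idem (phi : T -> T) e : endo phi -> idem e -> idem (phi e).
Proof. intros h he. unfold idem in *. rewrite <- h, he. reflexivity. Qed.

Lemma conj_idem a e : idem e -> idem (a ** e ** a^-1).
Proof.
  intro he. unfold idem.
  regroup (a ** (e ** (a^-1 ** a)) ** e ** a^-1).
  rewrite (idem_comm he (idem_ll a)).
  regroup (a ** a^-1 ** a ** (e ** e) ** a^-1). rewrite he, inv_l. reflexivity.
Qed.

Lemma conj_idem_r a e : idem e -> a ** e ** a^-1 ** a = a ** e.
Proof.
  intro he. regroup (a ** (e ** (a^-1 ** a))).
  rewrite (idem_comm he (idem_ll a)). regroup (a ** a^-1 ** a ** e). rewrite inv_l. reflexivity.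
Qed.

Lemma idem_of_eq e : e ** e = e -> idem e. Proof. auto. Qed.

End IS.
Section Grp.
Variable G : Group.
Implicit Types a b c : G.
Lemma g_cancel_l a b c : g_mul a b = g_mul a c -> b = c.
Proof. intro h. rewrite <- (g_mul1l b), <- (g_mul1l c), <- (g_mulVl a), <- !g_assoc, h. reflexivity. Qed.
Lemma g_cancel_r a b c : g_mul b a = g_mul c a -> b = c.
Proof. intro h. rewrite <- (g_mul1r b), <- (g_mul1r c), <- (g_mulVr a), !g_assoc, h. reflexivity. Qed.
Lemma g_idem a : g_mul a a = a -> a = g_one.
Proof. intro h. apply (g_cancel_l (a:=a)). rewrite g_mul1r. exact h. Qed.
Lemma g_inv_uniq a b : g_mul a b = g_one -> b = g_inv a.
Proof. intro h. apply (g_cancel_l (a:=a)). rewrite h, g_mulVr. reflexivity. Qed.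
Lemma g_inv_mul a b : g_inv (g_mul a b) = g_mul (g_inv b) (g_inv a).
Proof. symmetry. apply g_inv_uniq. rewrite g_assoc, <- (g_assoc a b), g_mulVr, g_mul1r, g_mulVr. reflexivity. Qed.
Lemma g_inv_one : g_inv (@g_one G) = g_one.
Proof. symmetry. apply g_inv_uniq. apply g_mul1l. Qed.
Lemma g_inv_inv a : g_inv (g_inv a) = a.
Proof. symmetry. apply g_inv_uniq. apply g_mulVl. Qed.
End Grp.

Lemma hom_idem (S : InvSemigroup) (K : Group) (p : S -> K) e :
  hom_to_group p -> idem e -> p e = g_one.
Proof. intros h he. apply g_idem. rewrite <- h, he. reflexivity. Qed.

Lemma hom_inv (S : InvSemigroup) (K : Group) (p : S -> K) s :
  hom_to_group p -> p (s^-1) = g_inv (p s).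
Proof.
  intro h. apply g_inv_uniq. rewrite <- h. apply hom_idem; auto. apply idem_rr.
Qed.

Section Cliff.
Variable A : InvSemigroup.
Hypothesis hA : semilattice_of_groups A.
Implicit Types a b c e g : A.

Lemma cl_central e a : idem e -> e ** a = a ** e.
Proof. apply hA. Qed.

Lemma cl_rr_ll a : a ** a^-1 = a^-1 ** a.
Proof.
  assert (h1 : a^-1 ** a = (a ** a^-1) ** (a^-1 ** a)).
  { symmetry. regroup ((a ** a^-1) ** a^-1 ** a).
    rewrite (cl_central a^-1 (idem_rr a)).
    regroup (a^-1 ** a ** a^-1 ** a). rewrite inv_r. reflexivity. }
  assert (h2 : a ** a^-1 = (a^-1 ** a) ** (a ** a^-1)).
  { symmetry. regroup ((a^-1 ** a) ** a ** a^-1).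
    rewrite (cl_central a (idem_ll a)).
    regroup (a ** a^-1 ** a ** a^-1). rewrite inv_l. reflexivity. }
  rewrite h2 at 1. rewrite (idem_comm (idem_ll a) (idem_rr a)). symmetry. exact h1.
Qed.

Lemma cl_ea_l a : a ** a^-1 ** a = a. Proof. apply inv_l. Qed.
Lemma cl_ea_r a : a ** (a ** a^-1) = a.
Proof. rewrite <- (cl_central a (idem_rr a)). apply inv_l. Qed.

Lemma cl_e_mul a b : (a ** b) ** (a ** b)^-1 = (a ** a^-1) ** (b ** b^-1).
Proof.
  rewrite inv_mul. regroup (a ** (b ** b^-1 ** a^-1)).
  rewrite (cl_central a^-1 (idem_rr b)). regroup (a ** a^-1 ** (b ** b^-1)). reflexivity.
Qed.

Lemma cl_e_inv a : a^-1 ** (a^-1)^-1 = a ** a^-1.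
Proof. rewrite inv_inv. symmetry. apply cl_rr_ll. Qed.

Lemma cl_in_Ae g a : in_Ae g a <-> a ** a^-1 = g.
Proof. unfold in_Ae. split. tauto. intro h. split. auto. rewrite <- cl_rr_ll. auto. Qed.

Lemma cl_idem_e e : idem e -> e ** e^-1 = e.
Proof. intro he. rewrite (idem_inv he). exact he. Qed.

Lemma cl_absorb e b : idem e -> (b ** b^-1) ** e = b ** b^-1 -> e ** b = b /\ b ** e = b.
Proof.
  intros he h.
  assert (e ** b = b).
  { rewrite <- (cl_ea_l b) at 1. regroup (e ** (b ** b^-1) ** b).
    rewrite (cl_central (b ** b^-1) he), h. apply cl_ea_l. }
  split; auto. rewrite <- cl_central; auto.
Qed.

End Cliff.
From Stdlib Require Import FunctionalExtensionality PropExtensionality ProofIrrelevance IndefiniteDescription.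

Section Sig.
Variable S : InvSemigroup.
Implicit Types s t u e g : S.

Definition sigr s t := exists e, idem e /\ e ** s = e ** t.

Lemma sig_refl s : sigr s s.
Proof. exists (s ** s^-1). split; [apply idem_rr|reflexivity]. Qed.
Lemma sig_sym s t : sigr s t -> sigr t s.
Proof. intros [e [he h]]. exists e; auto. Qed.
Lemma sig_trans s t u : sigr s t -> sigr t u -> sigr s u.
Proof.
  intros [e [he h1]] [g [hg h2]]. exists (g ** e). split. apply idem_mul; auto.
  rewrite <- !is_assoc, h1, !is_assoc, (idem_comm hg he), <- !is_assoc, h2. reflexivity.
Qed.
Lemma sig_cong_r s t u : sigr s t -> sigr (s ** u) (t ** u).
Proof. intros [e [he h]]. exists e. split; auto. rewrite !is_assoc, h. reflexivity. Qed.
Lemma sig_cong_l s t u : sigr s t -> sigr (u ** s) (u ** t).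
Proof.
  intros [e [he h]]. exists (u ** e ** u^-1). split. apply conj_idem; auto.
  rewrite !is_assoc, !conj_idem_r by auto. rewrite <- !is_assoc, h. reflexivity.
Qed.
Lemma sig_idem e g : idem e -> idem g -> sigr e g.
Proof.
  intros he hg. exists (e ** g). split. apply idem_mul; auto.
  unfold idem in *. regroup (e ** (g ** e)). rewrite (idem_comm hg he).
  regroup ((e ** e) ** g). rewrite he, <- is_assoc, hg. reflexivity.
Qed.

Variable s0 : S.

Definition cls_t := {P : S -> Prop | exists s, P = sigr s}.
Definition cls s : cls_t := exist _ (sigr s) (ex_intro _ s eq_refl).

Lemma cls_eq s t : cls s = cls t <-> sigr s t.
Proof.
  split.
  - intro h. apply (f_equal (@proj1_sig _ _)) in h. simpl in h.
    rewrite h. apply sig_refl.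
  - intro h. unfold cls.
    assert (E : sigr s = sigr t).
    { apply functional_extensionality. intro u. apply propositional_extensionality.
      split; intro k. apply sig_trans with s; auto. apply sig_sym; auto.
      apply sig_trans with t; auto. }
    apply eq_sig_hprop. intros; apply proof_irrelevance. exact E.
Qed.

Lemma cls_surj (P : cls_t) : exists s, P = cls s.
Proof.
  destruct P as [P [s e]]. exists s. apply eq_sig_hprop. intros; apply proof_irrelevance.
  exact e.
Qed.

Definition rep (P : cls_t) : S := proj1_sig (constructive_indefinite_description _ (cls_surj P)).
Lemma rep_spec P : P = cls (rep P).
Proof. unfold rep. destruct (constructive_indefinite_description _ (cls_surj P)). auto. Qed.

Definition cmul (P Q : cls_t) : cls_t := cls (rep P ** rep Q).
Definition cone : cls_t := cls (s0 ** s0^-1).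
Definition cinv (P : cls_t) : cls_t := cls ((rep P)^-1).

Lemma cmul_cls s t : cmul (cls s) (cls t) = cls (s ** t).
Proof.
  unfold cmul. apply cls_eq.
  assert (h1 : sigr (rep (cls s)) s). { apply cls_eq. symmetry. apply rep_spec. }
  assert (h2 : sigr (rep (cls t)) t). { apply cls_eq. symmetry. apply rep_spec. }
  apply sig_trans with (s ** rep (cls t)). apply sig_cong_r; auto. apply sig_cong_l; auto.
Qed.

Lemma c_assoc a b c : cmul a (cmul b c) = cmul (cmul a b) c.
Proof.
  destruct (cls_surj a) as [x ->], (cls_surj b) as [y ->], (cls_surj c) as [z ->].
  rewrite !cmul_cls, is_assoc. reflexivity.
Qed.
Lemma c_mul1l a : cmul cone a = a.
Proof.
  destruct (cls_surj a) as [x ->]. unfold cone. rewrite cmul_cls. apply cls_eq.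
  exists (s0 ** s0^-1). split. apply idem_rr. rewrite is_assoc, (idem_rr s0). reflexivity.
Qed.
Lemma c_mul1r a : cmul a cone = a.
Proof.
  destruct (cls_surj a) as [x ->]. unfold cone. rewrite cmul_cls. apply cls_eq.
  set (e := s0 ** s0^-1). assert (he : idem e) by apply idem_rr.
  exists (x ** e ** x^-1). split. apply conj_idem; auto.
  rewrite is_assoc, !conj_idem_r by auto.
  rewrite <- is_assoc, he. reflexivity.
Qed.
Lemma c_mulVl a : cmul (cinv a) a = cone.
Proof.
  pose proof (rep_spec a) as E. unfold cinv. set (r := rep a) in *.
  rewrite E. rewrite cmul_cls. apply cls_eq. apply sig_idem; apply idem_ll || apply idem_rr.
Qed.
Lemma c_mulVr a : cmul a (cinv a) = cone.
Proof.
  pose proof (rep_spec a) as E. unfold cinv. set (r := rep a) in *.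
  rewrite E. rewrite cmul_cls. apply cls_eq. apply sig_idem; apply idem_rr.
Qed.

Definition SigGroup : Group :=
  @Build_Group cls_t cmul cone cinv c_assoc c_mul1l c_mul1r c_mulVl c_mulVr.

Lemma cls_hom : hom_to_group (K := SigGroup) cls.
Proof. intros s t. simpl. symmetry. apply cmul_cls. Qed.

End Sig.

Lemma q_sig (S : InvSemigroup) (H : Group) (q : S -> H) :
  min_group_quotient q -> forall s t, q s = q t -> sigr s t.
Proof.
  intros [hh [hs hm]] s t e.
  destruct (hs g_one) as [s0 _].
  apply (proj1 (cls_eq s t)). apply (hm (SigGroup s0) (@cls S)). apply cls_hom. exact e.
Qed.
Section ISmore.
Variable T : InvSemigroup.
Implicit Types s t u e g h : T.

Lemma r_tg t g : idem g -> (t ** g) ** (t ** g)^-1 = t ** g ** t^-1.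
Proof. intro hg. rewrite inv_mul, (idem_inv hg). regroup (t ** (g ** g) ** t^-1). rewrite hg. reflexivity. Qed.

Lemma d_tg t g : idem g -> (t ** g)^-1 ** (t ** g) = (t^-1 ** t) ** g.
Proof.
  intro hg. rewrite inv_mul, (idem_inv hg). regroup (g ** (t^-1 ** t) ** g).
  rewrite (idem_comm hg (idem_ll t)). regroup ((t^-1 ** t) ** (g ** g)). rewrite hg. reflexivity.
Qed.

Lemma r_ht h t : idem h -> (h ** t) ** (h ** t)^-1 = h ** (t ** t^-1).
Proof.
  intro hh. rewrite inv_mul, (idem_inv hh). regroup (h ** ((t ** t^-1) ** h)).
  rewrite (idem_comm (idem_rr t) hh). regroup ((h ** h) ** (t ** t^-1)). rewrite hh. reflexivity.
Qed.

Lemma d_ht h t : idem h -> (h ** t)^-1 ** (h ** t) = t^-1 ** h ** t.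
Proof. intro hh. rewrite inv_mul, (idem_inv hh). regroup (t^-1 ** (h ** h) ** t). rewrite hh. reflexivity. Qed.

Lemma conj_le t g : idem g -> (t ** g ** t^-1) ** (t ** t^-1) = t ** g ** t^-1.
Proof. intro hg. rewrite is_assoc, conj_idem_r by auto. reflexivity. Qed.

Lemma rr_mul_le t u : ((t ** u) ** (t ** u)^-1) ** (t ** t^-1) = (t ** u) ** (t ** u)^-1.
Proof. rewrite inv_mul. regroup (t ** (u ** u^-1) ** t^-1 ** t ** t^-1).
  regroup (t ** (u ** u^-1) ** (t^-1 ** t ** t^-1)). rewrite inv_r. rewrite !is_assoc. reflexivity. Qed.

Lemma idem_conj' t g : idem g -> idem (t^-1 ** g ** t).
Proof. intro hg. pose proof (conj_idem t^-1 hg) as h. rewrite inv_inv in h. exact h. Qed.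

Lemma idem_idem_inv e : idem e -> idem (e^-1).
Proof. intro h. rewrite idem_inv; auto. Qed.

Lemma conj_ll s : s ** (s^-1 ** s) ** s^-1 = s ** s^-1.
Proof. regroup (s ** s^-1 ** s ** s^-1). rewrite inv_l. reflexivity. Qed.
Lemma conj_rr s : s^-1 ** (s ** s^-1) ** s = s^-1 ** s.
Proof. regroup (s^-1 ** s ** s^-1 ** s). rewrite inv_r. reflexivity. Qed.

End ISmore.

Section SS.
Variables (S : InvSemigroup) (H : Group) (q : S -> H).
Hypothesis hS : E_unitary S.
Hypothesis hq : min_group_quotient q.
Implicit Types s t u e g h : S.

Lemma q_hom s t : q (s ** t) = g_mul (q s) (q t). Proof. apply (proj1 hq). Qed.
Lemma q_idem e : idem e -> q e = g_one. Proof. apply hom_idem, (proj1 hq). Qed.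
Lemma q_inv s : q (s^-1) = g_inv (q s). Proof. apply hom_inv, (proj1 hq). Qed.

Lemma Eu s : q s = g_one -> idem s.
Proof.
  intro h. assert (h2 : q s = q (s ** s^-1)) by (rewrite (q_idem (idem_rr s)); auto).
  destruct (q_sig hq h2) as [e [he E]].
  apply (hS (e := e ** s)).
  - rewrite E. apply idem_mul; [auto | apply idem_rr].
  - exists e. split; auto.
Qed.

Lemma compat s t : q s = q t -> idem (s^-1 ** t).
Proof. intro h. apply Eu. rewrite q_hom, q_inv, h. apply g_mulVl. Qed.

Lemma compat_eq s t : q s = q t -> s^-1 ** t = (s^-1 ** s) ** (t^-1 ** t).
Proof.
  intro hst. assert (hg : idem (s^-1 ** t)) by (apply compat; auto).
  assert (hh : idem (s ** t^-1)).
  { pose proof (@compat (s^-1) (t^-1)) as k. rewrite !inv_inv in k. apply k. rewrite !q_inv, hst. reflexivity. }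
  assert (s1 : s^-1 ** t = ((s^-1 ** s) ** (t^-1 ** t)) ** (s^-1 ** t)).
  { transitivity ((s^-1 ** s ** s^-1) ** (t ** t^-1 ** t)). rewrite inv_r, inv_l. reflexivity.
    regroup ((s^-1 ** s) ** ((s^-1 ** t) ** (t^-1 ** t))). rewrite (idem_comm hg (idem_ll t)).
    rewrite !is_assoc. reflexivity. }
  assert (s2 : (s^-1 ** s) ** (t^-1 ** t) = (s^-1 ** (s ** t^-1) ** s) ** (s^-1 ** t)).
  { regroup ((s^-1 ** (s ** t^-1)) ** t). rewrite <- (conj_idem_r (s^-1) hh) at 1.
    rewrite inv_inv. rewrite !is_assoc. reflexivity. }
  rewrite s1. rewrite s2 at 1. rewrite <- is_assoc, hg, <- s2. reflexivity.
Qed.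

Lemma uniq_r s t : q s = q t -> s ** s^-1 = t ** t^-1 -> s = t.
Proof.
  intros hst hr.
  assert (k1 : t = s ** (t^-1 ** t)).
  { transitivity (t ** t^-1 ** t). symmetry; apply inv_l. rewrite <- hr.
    regroup (s ** (s^-1 ** t)). rewrite compat_eq by auto.
    regroup ((s ** s^-1 ** s) ** (t^-1 ** t)). rewrite inv_l. reflexivity. }
  assert (k2 : s = t ** (s^-1 ** s)).
  { transitivity (s ** s^-1 ** s). symmetry; apply inv_l. rewrite hr.
    regroup (t ** (t^-1 ** s)). rewrite compat_eq by auto.
    regroup ((t ** t^-1 ** t) ** (s^-1 ** s)). rewrite inv_l. reflexivity. }
  rewrite k2 at 1. rewrite k1. regroup (s ** ((t^-1 ** t) ** (s^-1 ** s))).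
  rewrite (idem_comm (idem_ll t) (idem_ll s)). regroup ((s ** s^-1 ** s) ** (t^-1 ** t)).
  rewrite inv_l, <- k1. reflexivity.
Qed.

Lemma uniq_d s t : q s = q t -> s^-1 ** s = t^-1 ** t -> s = t.
Proof.
  intros hst hd. rewrite <- (inv_inv s), <- (inv_inv t). f_equal.
  apply uniq_r. rewrite !q_inv, hst; auto. rewrite !inv_inv. auto.
Qed.

End SS.
Ltac tT hT := match goal with |- ?T (?x ** ?y) =>
  first [ exact (proj1 (hT x y ltac:(assumption))) | exact (proj2 (hT y x ltac:(assumption))) ] end.
Section SS2.
Variables (S : InvSemigroup) (H : Group) (q : S -> H).
Hypothesis hS : E_unitary S.
Hypothesis hq : min_group_quotient q.
Implicit Types s t u e g h : S.

Lemma compat_r s t : q s = q t -> s ** t^-1 = (s ** s^-1) ** (t ** t^-1).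
Proof.
  intro h. pose proof (@compat_eq S H q hS hq (s^-1) (t^-1)) as k. rewrite !inv_inv in k.
  apply k. rewrite !(q_inv hq), h. reflexivity.
Qed.

Lemma compat_r_idem s t : q s = q t -> idem (s ** t^-1).
Proof. intro h. rewrite compat_r by auto. apply idem_mul; apply idem_rr. Qed.

Lemma conj_d s t : q s = q t -> t ** (s^-1 ** s) ** t^-1 = (t ** t^-1) ** (s ** s^-1).
Proof.
  intro h. assert (hi : idem (t ** s^-1)) by (apply compat_r_idem; auto).
  transitivity ((t ** s^-1) ** (t ** s^-1)^-1).
  { rewrite inv_mul, inv_inv. rewrite ?is_assoc. reflexivity. }
  rewrite (idem_inv hi), hi. apply compat_r. auto.
Qed.
End SS2.

Section Cliff2.
Variable A : InvSemigroup.
Hypothesis hA : semilattice_of_groups A.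
Implicit Types a b c e g : A.

Lemma gconj_cancel c a : c ** c^-1 = a ** a^-1 -> c^-1 ** (c ** a ** c^-1) ** c = a.
Proof.
  intro h. regroup ((c^-1 ** c) ** a ** (c^-1 ** c)). rewrite <- (cl_rr_ll hA c), h.
  rewrite cl_ea_l. apply (cl_ea_r hA).
Qed.

Lemma gconj_cancel' c a : c ** c^-1 = a ** a^-1 -> c ** (c^-1 ** a ** c) ** c^-1 = a.
Proof.
  intro h. regroup ((c ** c^-1) ** a ** (c ** c^-1)). rewrite h.
  rewrite cl_ea_l. apply (cl_ea_r hA).
Qed.

Lemma ea_comm a b : (a ** a^-1) ** (b ** b^-1) = (b ** b^-1) ** (a ** a^-1).
Proof. apply idem_comm; apply idem_rr. Qed.

Lemma cl_e_conj c a : c ** c^-1 = a ** a^-1 -> (c^-1 ** a ** c) ** (c^-1 ** a ** c)^-1 = a ** a^-1.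
Proof.
  intro h. rewrite !(cl_e_mul hA), (cl_e_inv hA c), h.
  rewrite (idem_rr a). apply (idem_rr a).
Qed.

Lemma cl_e_inv' c : (c^-1) ** (c^-1)^-1 = c ** c^-1. Proof. apply cl_e_inv; auto. Qed.

Section Mult.
Variable T : A -> Prop.
Hypothesis hT : forall a b, T a -> T (a ** b) /\ T (b ** a).
Variable F : A -> A.
Hypothesis hF2 : forall a, T a -> F a ** (F a)^-1 = a ** a^-1.
Hypothesis hF3 : forall a b, T a -> T b -> a ** a^-1 = b ** b^-1 -> F a = F b.
Hypothesis hF4 : forall a b, T a -> T b -> F (a ** b) = (b ** b^-1) ** F a.

Lemma hF4' a b : T a -> T b -> F (a ** b) = (a ** a^-1) ** F b.
Proof.
  intros ha hb. rewrite (@hF3 (a ** b) (b ** a)). apply hF4; auto.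
  tT hT. tT hT. rewrite !(cl_e_mul hA). apply ea_comm.
Qed.

Lemma mult_of (w : (A -> A) * (A -> A)) :
  (forall a, T a -> fst w a = F a ** a /\ snd w a = a ** F a) -> multiplier T w.
Proof.
  intro hF1. split.
  - intros a ha. rewrite (proj1 (hF1 a ha)), (proj2 (hF1 a ha)). split; tT hT.
  - intros a b ha hb. assert (hab : T (a ** b)) by (tT hT).
    rewrite (proj1 (hF1 _ hab)), (proj2 (hF1 _ hab)), (proj1 (hF1 _ ha)), (proj2 (hF1 _ ha)),
      (proj1 (hF1 _ hb)), (proj2 (hF1 _ hb)).
    split; [|split].
    + rewrite hF4 by auto. regroup ((b ** b^-1) ** (F a ** a) ** b).
      rewrite (cl_central hA (F a ** a) (idem_rr b)). regroup (F a ** a ** (b ** b^-1 ** b)).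
      rewrite inv_l. rewrite ?is_assoc. reflexivity.
    + rewrite hF4' by auto. regroup (a ** (b ** (a ** a^-1)) ** F b).
      rewrite <- (cl_central hA b (idem_rr a)). regroup ((a ** (a ** a^-1)) ** b ** F b).
      rewrite (cl_ea_r hA). rewrite ?is_assoc. reflexivity.
    + transitivity (a ** F (a ** b) ** b).
      { rewrite hF4' by auto. rewrite <- (cl_ea_r hA a) at 1. rewrite ?is_assoc. reflexivity. }
      rewrite hF4 by auto. regroup (a ** ((b ** b^-1) ** F a) ** b).
      rewrite (cl_central hA (F a) (idem_rr b)). regroup (a ** F a ** (b ** b^-1 ** b)).
      rewrite inv_l. rewrite ?is_assoc. reflexivity.
Qed.

End Mult.

Lemma cl_e_same c a : c ** c^-1 = a ** a^-1 ->
  (c ** a) ** (c ** a)^-1 = a ** a^-1 /\ (a ** c) ** (a ** c)^-1 = a ** a^-1.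
Proof. intro h. rewrite !(cl_e_mul hA), h, (idem_rr a). auto. Qed.

Definition wFi (F : A -> A) : (A -> A) * (A -> A) :=
  (fun a => (F a)^-1 ** a, fun a => a ** (F a)^-1).

Lemma mult_unit_of (T : A -> Prop) (hT : forall a b, T a -> T (a ** b) /\ T (b ** a))
  (F : A -> A)
  (hF2 : forall a, T a -> F a ** (F a)^-1 = a ** a^-1)
  (hF3 : forall a b, T a -> T b -> a ** a^-1 = b ** b^-1 -> F a = F b)
  (hF4 : forall a b, T a -> T b -> F (a ** b) = (b ** b^-1) ** F a)
  (w : (A -> A) * (A -> A))
  (hF1 : forall a, T a -> fst w a = F a ** a /\ snd w a = a ** F a) :
  mult_inverse T w (wFi F) /\
  (forall w', mult_inverse T w w' -> forall a, T a -> snd w' a = a ** (F a)^-1).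
Proof.
  assert (hFi2 : forall a, T a -> (F a)^-1 ** ((F a)^-1)^-1 = a ** a^-1).
  { intros a ha. rewrite cl_e_inv'. auto. }
  assert (hFi1 : forall a, T a -> (F a)^-1 ** (F a) = a ** a^-1).
  { intros a ha. rewrite <- (cl_rr_ll hA). auto. }
  assert (m1 : multiplier T w) by (apply (mult_of hT hF3 hF4); auto).
  assert (m2 : multiplier T (wFi F)).
  { apply (@mult_of T hT (fun a => (F a)^-1)).
    - intros a b ha hb e. rewrite (hF3 _ _ ha hb e). reflexivity.
    - intros a b ha hb. rewrite (hF4 _ _ ha hb), inv_mul, (idem_inv (idem_rr b)).
      symmetry. apply (cl_central hA). apply idem_rr.
    - intros a ha; simpl; auto. }
  assert (inv : mult_inverse T w (wFi F)).
  { split; [auto|split; [auto|]]. intros a ha. simpl.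
    destruct (cl_e_same (hFi2 a ha)) as [e1 e2].
    destruct (cl_e_same (hF2 a ha)) as [e3 e4].
    assert (t1 : T ((F a)^-1 ** a)) by (tT hT).
    assert (t2 : T (a ** (F a)^-1)) by (tT hT).
    assert (t3 : T (F a ** a)) by (tT hT).
    assert (t4 : T (a ** F a)) by (tT hT).
    rewrite (proj1 (hF1 _ t1)), (proj2 (hF1 _ t2)), (proj1 (hF1 _ ha)), (proj2 (hF1 _ ha)).
    rewrite (hF3 _ _ t1 ha e1), (hF3 _ _ t2 ha e2), (hF3 _ _ t3 ha e3), (hF3 _ _ t4 ha e4).
    repeat split.
    - rewrite is_assoc, (hF2 a ha). apply inv_l.
    - rewrite is_assoc, (hFi1 a ha). apply inv_l.
    - rewrite <- is_assoc, (hFi1 a ha). apply (cl_ea_r hA).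
    - rewrite <- is_assoc, (hF2 a ha). apply (cl_ea_r hA). }
  split; auto.
  intros w' [_ [_ hw']] a ha.
  assert (t2 : T (a ** (F a)^-1)) by (tT hT).
  destruct (cl_e_same (hFi2 a ha)) as [_ e2].
  assert (k : snd w (a ** (F a)^-1) = a).
  { rewrite (proj2 (hF1 _ t2)), (hF3 _ _ t2 ha e2), <- is_assoc, (hFi1 a ha). apply (cl_ea_r hA). }
  rewrite <- k at 1. apply (hw' _ t2).
Qed.

End Cliff2.
Section TM.
Variables (S A : InvSemigroup) (H : Group) (q : S -> H).
Hypothesis hS : E_unitary S.
Hypothesis hA : semilattice_of_groups A.
Hypothesis hq : min_group_quotient q.
Variables (alpha : S -> A) (lam : S -> A -> A) (f : S -> S -> A).
Hypothesis al_idem : forall e, idem e -> idem (alpha e).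
Hypothesis al_mul : forall e g, idem e -> idem g -> alpha (e ** g) = alpha e ** alpha g.
Hypothesis al_inj : forall e g, idem e -> idem g -> alpha e = alpha g -> e = g.
Hypothesis al_surj : forall g : A, idem g -> exists e, idem e /\ alpha e = g.
Hypothesis lam_endo : forall s, endo (lam s).
Hypothesis hfA : forall s t, in_Ae (alpha (s ** t ** t^-1 ** s^-1)) (f s t).
Hypothesis h1 : forall e a, idem e -> lam e a = alpha e ** a.
Hypothesis h2 : forall s e, idem e -> lam s (alpha e) = alpha (s ** e ** s^-1).
Hypothesis h3 : forall s t a, lam s (lam t a) = f s t ** lam (s ** t) a ** (f s t)^-1.
Hypothesis h5 : forall s t u, lam s (f t u) ** f s (t ** u) = f s t ** f (s ** t) u.
Hypothesis hsieb : forall s e, idem e -> f s e = alpha (s ** e ** s^-1) /\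
                         f e s = alpha (e ** s ** s^-1).

Implicit Types s t u e g h : S.
Implicit Types a b c : A.

Notation D := (Dom q alpha).

Lemma al_rr s : idem (alpha (s ** s^-1)). Proof. apply al_idem, idem_rr. Qed.
Lemma al_ll s : idem (alpha (s^-1 ** s)). Proof. apply al_idem, idem_ll. Qed.

Lemma ea_surj a : exists h, idem h /\ alpha h = a ** a^-1.
Proof. apply al_surj, idem_rr. Qed.

Lemma al_le e g : idem e -> idem g -> e ** g = e -> alpha e ** alpha g = alpha e.
Proof. intros he hg k. rewrite <- al_mul by auto. rewrite k. reflexivity. Qed.

Lemma lam_inv s a : lam s (a^-1) = (lam s a)^-1.
Proof. apply endo_inv, lam_endo. Qed.

Lemma lam_ea s a : lam s a ** (lam s a)^-1 = lam s (a ** a^-1).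
Proof. rewrite <- lam_inv, (lam_endo s). reflexivity. Qed.

Lemma lam_range u a : alpha (u ** u^-1) ** lam u a = lam u a /\ lam u a ** alpha (u ** u^-1) = lam u a.
Proof.
  apply (cl_absorb hA). apply al_rr.
  destruct (ea_surj a) as [h [hh e]]. rewrite lam_ea, <- e, h2 by auto.
  apply al_le. apply conj_idem; auto. apply idem_rr. apply conj_le; auto.
Qed.

Lemma f_ea s t : f s t ** (f s t)^-1 = alpha ((s ** t) ** (s ** t)^-1).
Proof. rewrite (proj1 (hfA s t)). rewrite (inv_mul s t). rewrite ?is_assoc. reflexivity. Qed.

Lemma f_idem_l e s : idem e -> f e s = alpha (e ** (s ** s^-1)).
Proof. intro he. rewrite (proj2 (hsieb s he)). rewrite ?is_assoc. reflexivity. Qed.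

Lemma lam_restr s g a : idem g -> lam (s ** g) a = lam s (alpha g ** a).
Proof.
  intro hg. rewrite <- (h1 a hg), h3, (proj1 (hsieb s hg)).
  assert (hE : idem (alpha (s ** g ** s^-1))) by (apply al_idem, conj_idem; auto).
  rewrite (idem_inv hE).
  pose proof (lam_range (s ** g) a) as [k1 k2]. rewrite (r_tg s hg) in k1, k2.
  rewrite k1. symmetry. exact k2.
Qed.

Lemma Dom_iff x a : D x a <-> exists s, q s = x /\ alpha (s ** s^-1) = a ** a^-1.
Proof.
  unfold Dom. split; intros [s [k1 k2]]; exists s; split; auto.
  apply (cl_in_Ae hA) in k2. auto. apply (cl_in_Ae hA). auto.
Qed.

Lemma Dinv_iff x a : D (g_inv x) a <-> exists s, q s = x /\ alpha (s^-1 ** s) = a ** a^-1.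
Proof.
  rewrite Dom_iff. split; intros [s [k1 k2]].
  - exists (s^-1). rewrite (q_inv hq), k1, g_inv_inv, inv_inv. auto.
  - exists (s^-1). rewrite (q_inv hq), k1. split; auto. rewrite inv_inv. auto.
Qed.

Lemma D_ideal x a b : D x a -> D x (a ** b) /\ D x (b ** a).
Proof.
  rewrite !Dom_iff. intros [s [k1 k2]]. destruct (ea_surj b) as [h [hh e]].
  assert (q1 : q (h ** s) = x) by (rewrite (q_hom hq), (q_idem hq hh), g_mul1l; auto).
  split; exists (h ** s); split; auto; rewrite r_ht, al_mul by (auto; apply idem_rr);
    rewrite e, k2, !(cl_e_mul hA); auto. apply ea_comm.
Qed.

Lemma D_nonempty x : exists a, D x a.
Proof.
  destruct (proj1 (proj2 hq) x) as [s k]. exists (alpha (s ** s^-1)).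
  apply Dom_iff. exists s. split; auto. rewrite (cl_idem_e (al_rr s)). reflexivity.
Qed.

Lemma D_one a : D g_one a.
Proof.
  apply Dom_iff. destruct (ea_surj a) as [h [hh e]]. exists h. split.
  apply (q_idem hq hh). rewrite (idem_inv hh), hh. auto.
Qed.

Lemma T_iff x y a : setmul (D x) (D y) a <-> D x a /\ D y a.
Proof.
  split.
  - intros [b [c [hb [hc ->]]]]. split. apply (D_ideal c hb). apply (D_ideal b hc).
  - intros [k1 k2]. exists a, (a^-1 ** a). split; auto. split.
    apply (D_ideal (a^-1) k2). symmetry. rewrite is_assoc. apply inv_l.
Qed.

Variable theta : H -> A -> A.
Hypothesis htheta : forall x a, D (g_inv x) a ->
     forall s, q s = x -> alpha (s^-1 ** s) = a ** a^-1 -> theta x a = lam s a.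

Lemma theta_gen x s a : q s = x -> (a ** a^-1) ** alpha (s^-1 ** s) = a ** a^-1 ->
  theta x a = lam s a.
Proof.
  intros k1 k2. destruct (ea_surj a) as [h [hh e]].
  assert (q1 : q (s ** h) = x) by (rewrite (q_hom hq), (q_idem hq hh), g_mul1r; auto).
  assert (d1 : alpha ((s ** h)^-1 ** (s ** h)) = a ** a^-1).
  { rewrite d_tg, al_mul, e by (auto; apply idem_ll). rewrite <- k2 at 2. apply idem_comm; [apply al_ll|apply idem_rr]. }
  assert (hD : D (g_inv x) a) by (apply Dinv_iff; exists (s ** h); auto).
  rewrite (htheta hD q1 d1).
  rewrite lam_restr, e, inv_l by auto. reflexivity.
Qed.

Lemma theta_D x a : D (g_inv x) a -> exists s, q s = x /\ alpha (s^-1 ** s) = a ** a^-1 /\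
  theta x a = lam s a /\ theta x a ** (theta x a)^-1 = alpha (s ** s^-1).
Proof.
  intro ha. destruct (proj1 (Dinv_iff x a) ha) as [s [k1 k2]]. exists s.
  assert (t1 : theta x a = lam s a) by (apply htheta; auto).
  repeat split; auto. rewrite t1, lam_ea, <- k2, h2 by apply idem_ll.
  f_equal. regroup (s ** s^-1 ** s ** s^-1). rewrite inv_l. reflexivity.
Qed.

Lemma theta_maps x a : D (g_inv x) a -> D x (theta x a).
Proof.
  intro ha. destruct (theta_D ha) as [s [k1 [_ [_ k4]]]]. apply Dom_iff. exists s. auto.
Qed.

Lemma lam_cancel s a : (lam (s^-1) (lam s a)) = f (s^-1) s ** (alpha (s^-1 ** s) ** a) ** (f (s^-1) s)^-1.
Proof. rewrite h3, h1 by apply idem_ll. reflexivity. Qed.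

Lemma f_ea_ss s : f (s^-1) s ** (f (s^-1) s)^-1 = alpha (s^-1 ** s).
Proof. rewrite f_ea, (cl_idem_e (idem_ll s)). reflexivity. Qed.

Lemma f_ea_ss' s : f s (s^-1) ** (f s (s^-1))^-1 = alpha (s ** s^-1).
Proof. rewrite f_ea, (cl_idem_e (idem_rr s)). reflexivity. Qed.

Lemma theta_inj x a b : D (g_inv x) a -> D (g_inv x) b -> theta x a = theta x b -> a = b.
Proof.
  intros ha hb e.
  destruct (theta_D ha) as [s [k1 [k2 [k3 k4]]]].
  destruct (theta_D hb) as [t [l1 [l2 [l3 l4]]]].
  assert (st : s = t).
  { apply (uniq_r hS hq). congruence. apply al_inj; try apply idem_rr. congruence. }
  subst t. rewrite k3, l3 in e.
  assert (e2 := f_equal (lam (s^-1)) e). rewrite !lam_cancel in e2.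
  rewrite k2 in e2 at 1. rewrite l2 in e2. rewrite !inv_l in e2.
  rewrite <- (gconj_cancel hA (c := f (s^-1) s) (a := a)), <- (gconj_cancel hA (c := f (s^-1) s) (a := b)).
  rewrite e2. reflexivity. rewrite f_ea_ss. auto. rewrite f_ea_ss. auto.
Qed.

Lemma theta_surj x b : D x b -> exists a, D (g_inv x) a /\ theta x a = b.
Proof.
  intro hb. destruct (proj1 (Dom_iff x b) hb) as [s [k1 k2]].
  set (c := f s (s^-1)).
  assert (ec : c ** c^-1 = b ** b^-1) by (unfold c; rewrite f_ea_ss'; auto).
  set (y := c^-1 ** b ** c).
  assert (ey : y ** y^-1 = b ** b^-1) by (apply (cl_e_conj hA); auto).
  exists (lam (s^-1) y).
  assert (ea1 : lam (s^-1) y ** (lam (s^-1) y)^-1 = alpha (s^-1 ** s)).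
  { rewrite lam_ea, ey, <- k2, h2, inv_inv by apply idem_rr.
    f_equal. regroup (s^-1 ** s ** s^-1 ** s). rewrite inv_r. reflexivity. }
  split.
  - apply Dinv_iff. exists s. auto.
  - rewrite (theta_gen (s := s)); auto.
    + rewrite h3, h1 by apply idem_rr. fold c. rewrite k2, <- ey, inv_l.
      unfold y. apply (gconj_cancel' hA). auto.
    + rewrite ea1. apply (al_ll s).
Qed.

Lemma lam_theta x s c : q s = x -> D (g_inv x) c -> lam s c = alpha (s ** s^-1) ** theta x c.
Proof.
  intros k hc. destruct (theta_D hc) as [t [l1 [l2 [l3 l4]]]].
  set (c' := alpha (s^-1 ** s) ** c).
  assert (ec' : c' ** c'^-1 = alpha (s^-1 ** s) ** (c ** c^-1)).
  { unfold c'. rewrite (cl_e_mul hA), (cl_idem_e (al_ll s)). reflexivity. }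
  assert (e1 : lam s c' = lam s c).
  { unfold c'. rewrite (lam_endo s), h2 by apply idem_ll.
    rewrite conj_ll. apply lam_range. }
  assert (e2 : theta x c' = lam s c').
  { apply theta_gen; auto. rewrite ec'. regroup (alpha (s^-1 ** s) ** ((c ** c^-1) ** alpha (s^-1 ** s))).
    rewrite (idem_comm (idem_rr c) (al_ll s)).
    regroup ((alpha (s^-1 ** s) ** alpha (s^-1 ** s)) ** (c ** c^-1)). rewrite (al_ll s). reflexivity. }
  assert (e3 : theta x c' = lam t c').
  { apply theta_gen; auto. rewrite ec', <- l2. rewrite <- is_assoc, (al_ll t). reflexivity. }
  rewrite <- e1, <- e2, e3. unfold c'. rewrite (lam_endo t), h2 by apply idem_ll.
  assert (hst : q s = q t) by congruence.
  rewrite (conj_d hS hq hst), al_mul by apply idem_rr. rewrite <- l3.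
  rewrite (idem_comm (al_rr t) (al_rr s)), <- is_assoc, <- l4, cl_ea_l. reflexivity.
Qed.

Lemma theta_hom x a b : D (g_inv x) a -> D (g_inv x) b -> theta x (a ** b) = theta x a ** theta x b.
Proof.
  intros ha hb. destruct (theta_D ha) as [s [k1 [k2 [k3 k4]]]].
  rewrite (theta_gen (s := s) (a := a ** b)); auto.
  - rewrite (lam_endo s), (lam_theta k1 hb), <- k3, is_assoc, <- k4, (cl_ea_r hA). reflexivity.
  - rewrite (cl_e_mul hA), k2. regroup ((a ** a^-1) ** ((b ** b^-1) ** (a ** a^-1))).
    rewrite <- (ea_comm a b). rewrite is_assoc, (idem_rr a). reflexivity.
Qed.


Lemma absorb_al e b : idem e -> (b ** b^-1) ** alpha e = b ** b^-1 -> alpha e ** b = b /\ b ** alpha e = b.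
Proof. intros he k. apply (cl_absorb hA); auto. Qed.

Lemma f_ea' s t : f s t ** (f s t)^-1 = alpha (s ** (t ** t^-1) ** s^-1).
Proof. rewrite f_ea, inv_mul. rewrite ?is_assoc. reflexivity. Qed.

Lemma f_mid s g u : idem g -> f s (g ** u) = f (s ** g) u.
Proof.
  intro hg. pose proof (h5 s g u) as k.
  assert (hk : idem (g ** (u ** u^-1))) by (apply idem_mul; auto; apply idem_rr).
  rewrite (f_idem_l _ hg), (proj1 (hsieb s hg)), h2 in k by auto.
  assert (eq1 : s ** (g ** u ** (g ** u)^-1) ** s^-1 = s ** (g ** (u ** u^-1)) ** s^-1).
  { f_equal. f_equal. rewrite r_ht; auto. }
  assert (eq2 : s ** g ** (u ** u^-1) ** (s ** g)^-1 = s ** (g ** (u ** u^-1)) ** s^-1).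
  { rewrite inv_mul, (idem_inv hg). regroup (s ** (g ** ((u ** u^-1) ** g)) ** s^-1).
    rewrite (idem_comm (idem_rr u) hg). regroup (s ** ((g ** g) ** (u ** u^-1)) ** s^-1). rewrite hg. reflexivity. }
  assert (le : (s ** (g ** (u ** u^-1)) ** s^-1) ** (s ** g ** s^-1) = s ** (g ** (u ** u^-1)) ** s^-1).
  { regroup ((s ** (g ** (u ** u^-1)) ** s^-1 ** s) ** g ** s^-1). rewrite (conj_idem_r s hk).
    regroup (s ** ((g ** (u ** u^-1)) ** g) ** s^-1).
    rewrite <- (idem_comm hg hk). regroup (s ** ((g ** g) ** (u ** u^-1)) ** s^-1). rewrite hg. reflexivity. }
  assert (hX : idem (s ** (g ** (u ** u^-1)) ** s^-1)) by (apply conj_idem; auto).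
  assert (A1 : alpha (s ** (g ** (u ** u^-1)) ** s^-1) ** f s (g ** u) = f s (g ** u)).
  { apply absorb_al; auto. rewrite f_ea', eq1. apply (al_idem hX). }
  assert (A2 : alpha (s ** g ** s^-1) ** f (s ** g) u = f (s ** g) u).
  { apply absorb_al. apply conj_idem; auto. rewrite f_ea', eq2. apply al_le; auto. apply conj_idem; auto. }

  rewrite A1, A2 in k. exact k.
Qed.

Lemma f_left h t u : idem h -> f (h ** t) u = alpha h ** f t u.
Proof.
  intro hh. pose proof (h5 h t u) as k.
  rewrite h1, (f_idem_l _ hh), (f_idem_l _ hh) in k by auto.
  rewrite (al_mul hh (idem_rr (t ** u))), (al_mul hh (idem_rr t)) in k.
  assert (B1 : f t u ** alpha ((t ** u) ** (t ** u)^-1) = f t u).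
  { rewrite <- f_ea. apply (cl_ea_r hA). }
  assert (B2 : alpha h ** alpha (t ** t^-1) ** f (h ** t) u = f (h ** t) u).
  { rewrite <- al_mul by (auto; apply idem_rr). apply absorb_al. apply idem_mul; auto; apply idem_rr.
    rewrite f_ea, <- (is_assoc h t u), (r_ht (t ** u) hh).
    apply al_le; try (apply idem_mul; [auto|apply idem_rr]).
    regroup (h ** (((t ** u) ** (t ** u)^-1) ** h) ** (t ** t^-1)).
    rewrite (idem_comm (idem_rr (t ** u)) hh).
    regroup ((h ** h) ** (((t ** u) ** (t ** u)^-1) ** (t ** t^-1))). rewrite hh, rr_mul_le. reflexivity. }
  rewrite B2 in k. rewrite <- k.
  regroup (alpha h ** (f t u ** alpha h) ** alpha ((t ** u) ** (t ** u)^-1)).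
  rewrite <- (cl_central hA (f t u) (al_idem hh)). regroup ((alpha h ** alpha h) ** (f t u ** alpha ((t ** u) ** (t ** u)^-1))).
  rewrite B1, (al_idem hh). reflexivity.
Qed.

Variable w : H -> H -> (A -> A) * (A -> A).
Hypothesis hw : forall x y a,
     setmul (D x) (D (g_mul x y)) a ->
     forall s t, q s = x -> q t = g_mul x y ->
       alpha (s ** s^-1) = a ** a^-1 -> alpha (t ** t^-1) = a ** a^-1 ->
       fst (w x y) a = f s (s^-1 ** t) ** a /\
       snd (w x y) a = a ** f s (s^-1 ** t).

Definition Fw x y a := fst (w x y) (a ** a^-1).

Lemma rr_st s t : s ** s^-1 = t ** t^-1 -> s ** (s^-1 ** t) = t.
Proof. intro e. rewrite is_assoc, e, inv_l. reflexivity. Qed.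

Lemma Fw_val x y a s t : setmul (D x) (D (g_mul x y)) a -> q s = x -> q t = g_mul x y ->
  alpha (s ** s^-1) = a ** a^-1 -> alpha (t ** t^-1) = a ** a^-1 ->
  Fw x y a = f s (s^-1 ** t) /\ fst (w x y) a = Fw x y a ** a /\ snd (w x y) a = a ** Fw x y a.
Proof.
  intros hT k1 k2 k3 k4.
  assert (hT' : setmul (D x) (D (g_mul x y)) (a ** a^-1)).
  { apply T_iff in hT. apply T_iff. destruct hT as [u v].
    split; [exact (proj1 (D_ideal (a^-1) u)) | exact (proj1 (D_ideal (a^-1) v))]. }
  assert (e1 : (a ** a^-1) ** (a ** a^-1)^-1 = a ** a^-1) by apply (cl_idem_e (idem_rr a)).
  assert (rst : s ** s^-1 = t ** t^-1) by (apply al_inj; try apply idem_rr; congruence).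
  assert (Fv : Fw x y a = f s (s^-1 ** t)).
  { unfold Fw. rewrite (proj1 (hw hT' k1 k2 (eq_trans k3 (eq_sym e1)) (eq_trans k4 (eq_sym e1)))).
    assert (ef : f s (s^-1 ** t) ** (f s (s^-1 ** t))^-1 = a ** a^-1) by (rewrite f_ea, (rr_st rst), k4; reflexivity).
    rewrite <- ef. apply (cl_ea_r hA). }
  rewrite Fv. split; auto.
Qed.

Lemma T_wit x y a : setmul (D x) (D (g_mul x y)) a -> exists s t, q s = x /\ q t = g_mul x y /\
  alpha (s ** s^-1) = a ** a^-1 /\ alpha (t ** t^-1) = a ** a^-1.
Proof.
  intro hT. apply T_iff in hT. destruct hT as [k1 k2].
  apply Dom_iff in k1, k2. destruct k1 as [s [l1 l2]], k2 as [t [m1 m2]]. exists s, t. auto.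
Qed.

Lemma w_unit x y : mult_unit (setmul (D x) (D (g_mul x y))) (w x y) /\
  (forall w', mult_inverse (setmul (D x) (D (g_mul x y))) (w x y) w' ->
    forall a, setmul (D x) (D (g_mul x y)) a -> snd w' a = a ** (Fw x y a)^-1).
Proof.
  set (T := setmul (D x) (D (g_mul x y))).
  assert (hT : forall a b, T a -> T (a ** b) /\ T (b ** a)).
  { intros a b ha. unfold T in *. rewrite !T_iff in *. destruct ha as [u v].
    split; split; first [exact (proj1 (D_ideal b u)) | exact (proj1 (D_ideal b v)) |
      exact (proj2 (D_ideal b u)) | exact (proj2 (D_ideal b v))]. }
  assert (hF1 : forall a, T a -> fst (w x y) a = Fw x y a ** a /\ snd (w x y) a = a ** Fw x y a).
  { intros a ha. destruct (T_wit ha) as [s [t [k1 [k2 [k3 k4]]]]]. apply (Fw_val ha k1 k2 k3 k4). }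
  assert (hF2 : forall a, T a -> Fw x y a ** (Fw x y a)^-1 = a ** a^-1).
  { intros a ha. destruct (T_wit ha) as [s [t [k1 [k2 [k3 k4]]]]].
    rewrite (proj1 (Fw_val ha k1 k2 k3 k4)), f_ea, rr_st. auto.
    apply al_inj; try apply idem_rr; congruence. }
  assert (hF3 : forall a b, T a -> T b -> a ** a^-1 = b ** b^-1 -> Fw x y a = Fw x y b).
  { intros a b _ _ e. unfold Fw. rewrite e. reflexivity. }
  assert (hF4 : forall a b, T a -> T b -> Fw x y (a ** b) = (b ** b^-1) ** Fw x y a).
  { intros a b ha hb. destruct (T_wit ha) as [s [t [k1 [k2 [k3 k4]]]]].
    destruct (ea_surj b) as [h [hh e]].
    assert (hab : T (a ** b)) by (exact (proj1 (hT a b ha))).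
    assert (eab : alpha h ** (a ** a^-1) = (a ** b) ** (a ** b)^-1).
    { rewrite (cl_e_mul hA), e. apply ea_comm. }
    assert (q1 : q (h ** s) = x) by (rewrite (q_hom hq), (q_idem hq hh), g_mul1l; auto).
    assert (q2 : q (h ** t) = g_mul x y) by (rewrite (q_hom hq), (q_idem hq hh), g_mul1l; auto).
    assert (r1 : alpha ((h ** s) ** (h ** s)^-1) = (a ** b) ** (a ** b)^-1)
      by (rewrite (r_ht s hh), (al_mul hh (idem_rr s)), k3; auto).
    assert (r2 : alpha ((h ** t) ** (h ** t)^-1) = (a ** b) ** (a ** b)^-1)
      by (rewrite (r_ht t hh), (al_mul hh (idem_rr t)), k4; auto).
    rewrite (proj1 (Fw_val ha k1 k2 k3 k4)).
    rewrite (proj1 (Fw_val hab q1 q2 r1 r2)).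
    rewrite <- e. rewrite inv_mul, (idem_inv hh).
    assert (e2 : s^-1 ** h ** (h ** t) = (s^-1 ** h ** s) ** (s^-1 ** t)).
    { regroup (s^-1 ** (h ** h) ** t). rewrite hh.
      pose proof (conj_idem_r (s^-1) hh) as c. rewrite inv_inv in c.
      rewrite <- c at 1. rewrite ?is_assoc. reflexivity. }
    rewrite e2, f_mid by (apply idem_conj'; auto).
    assert (e3 : h ** s ** (s^-1 ** h ** s) = h ** s).
    { regroup (h ** (s ** s^-1 ** h) ** s). rewrite (idem_comm (idem_rr s) hh).
      regroup ((h ** h) ** (s ** s^-1 ** s)). rewrite hh, inv_l. reflexivity. }
    rewrite e3, f_left by auto. reflexivity. }
  destruct (mult_unit_of hA hT hF2 hF3 hF4 hF1) as [i1 i2].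
  split. exists (wFi (Fw x y)). exact i1. exact i2.
Qed.


Lemma r_st s t : (s ** t) ** (s ** t)^-1 = s ** (t ** t^-1) ** s^-1.
Proof. rewrite inv_mul. rewrite ?is_assoc. reflexivity. Qed.

Lemma r_pu p u : u ** u^-1 = p^-1 ** p -> (p ** u) ** (p ** u)^-1 = p ** p^-1.
Proof. intro e. rewrite r_st, e. apply conj_ll. Qed.

Lemma Fw_ea x y a : setmul (D x) (D (g_mul x y)) a -> Fw x y a ** (Fw x y a)^-1 = a ** a^-1.
Proof.
  intro ha. destruct (T_wit ha) as [s [t [k1 [k2 [k3 k4]]]]].
  rewrite (proj1 (Fw_val ha k1 k2 k3 k4)), f_ea, rr_st. auto.
  apply al_inj; try apply idem_rr; congruence.
Qed.

Lemma Fw_ext x y a b : a ** a^-1 = b ** b^-1 -> Fw x y a = Fw x y b.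
Proof. intro e. unfold Fw. rewrite e. reflexivity. Qed.

Lemma Tmk x y a : D x a -> D y a -> setmul (D x) (D y) a.
Proof. intros; apply T_iff; auto. Qed.

Lemma ea_theta_lam x p a : D (g_inv x) a -> q p = x -> alpha (p^-1 ** p) = a ** a^-1 ->
  lam p a ** (lam p a)^-1 = alpha (p ** p^-1).
Proof.
  intros ha k1 k2. rewrite lam_ea, <- k2, h2 by apply idem_ll. rewrite conj_ll. reflexivity.
Qed.

Lemma tpa : twisted_partial_action (Dom q alpha) theta w.
Proof.
  unfold twisted_partial_action.
  split; [|split; [|split; [|split; [|split; [|split; [|split; [|split; [|split; [|split]]]]]]]]].
  - intro x. split. intros a b ha. apply D_ideal; auto. apply D_nonempty.
  - intro x. split; [|split; [|split]].
    + intros a ha. apply theta_maps; auto.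
    + intros a b ha hb e. apply (theta_inj ha hb e).
    + intros b hb. apply theta_surj; auto.
    + intros a b ha hb. apply theta_hom; auto.
  - intros x y. apply w_unit.
  - intros x a. rewrite T_iff. tauto.
  - intros x y a. rewrite !T_iff. tauto.
  - apply D_one.
  - intro a. destruct (ea_surj a) as [h [hh e]].
    rewrite (theta_gen (s := h)). rewrite h1 by auto. rewrite e. apply inv_l.
    apply (q_idem hq hh). rewrite (idem_inv hh), hh, e. apply (idem_rr a).
  -
    intros x y b. split.
    + intros [a [ha <-]]. apply T_iff in ha. destruct ha as [ha1 ha2].
      destruct (theta_D ha1) as [s [k1 [k2 [k3 k4]]]].
      destruct (proj1 (Dom_iff y a) ha2) as [u [l1 l2]].
      apply Tmk. apply theta_maps; auto.
      apply Dom_iff. exists (s ** u). split. rewrite (q_hom hq), k1, l1. auto.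
      rewrite k4. f_equal. apply r_pu. apply al_inj; try apply idem_rr; try apply idem_ll. congruence.
    + intro hb. apply T_iff in hb. destruct hb as [hb1 hb2].
      destruct (theta_surj hb1) as [a [ha e]]. exists a. split; auto.
      apply Tmk; auto.
      destruct (theta_D ha) as [s [k1 [k2 [k3 k4]]]].
      destruct (proj1 (Dom_iff _ b) hb2) as [t [l1 l2]].
      assert (rts : t ** t^-1 = s ** s^-1) by (apply al_inj; try apply idem_rr; congruence).
      apply Dom_iff. exists (s^-1 ** t). split.
      * rewrite (q_hom hq), (q_inv hq), k1, l1, g_assoc, g_mulVl, g_mul1l. reflexivity.
      * rewrite r_st, rts, inv_inv, conj_rr. auto.
  -
    intros x y w' hw' a ha.
    rewrite <- g_inv_mul in ha. apply T_iff in ha. destruct ha as [ha1 ha2].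
    destruct (theta_D ha1) as [u [k1 [k2 [k3 k4]]]].
    destruct (theta_D ha2) as [v [l1 [l2 [l3 l4]]]].
    assert (duv : u^-1 ** u = v^-1 ** v) by (apply al_inj; try apply idem_ll; congruence).
    set (s' := v ** u^-1).
    assert (qs : q s' = x).
    { unfold s'. rewrite (q_hom hq), (q_inv hq), k1, l1, <- g_assoc, g_mulVr, g_mul1r. reflexivity. }
    assert (ds : s'^-1 ** s' = u ** u^-1).
    { unfold s'. rewrite inv_mul, inv_inv. regroup (u ** (v^-1 ** v) ** u^-1). rewrite <- duv. apply conj_ll. }
    assert (su : s' ** u = v). { unfold s'. rewrite <- is_assoc, duv, is_assoc, inv_l. reflexivity. }
    assert (rs : s' ** s'^-1 = v ** v^-1).
    { unfold s'. rewrite r_st, inv_inv, duv. apply conj_ll. }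
    assert (sv : s'^-1 ** v = u).
    { unfold s'. rewrite inv_mul, inv_inv, <- is_assoc, <- duv, is_assoc. rewrite inv_l. reflexivity. }
    rewrite k3, (theta_gen (s := s')); auto.
    2: { rewrite (ea_theta_lam ha1 k1 k2), ds. apply al_rr. }
    rewrite h3, su.
    set (c := theta (g_mul x y) a).
    assert (hc : setmul (D x) (D (g_mul x y)) c).
    { apply Tmk. apply Dom_iff. exists s'. split; auto. unfold c. rewrite l4, rs. reflexivity.
      unfold c; apply theta_maps; auto. }
    assert (Fc : Fw x y c = f s' u).
    { rewrite <- sv. apply (Fw_val hc qs l1). unfold c. rewrite l4, rs. reflexivity. unfold c. rewrite l4. reflexivity. }
    destruct (Fw_val hc qs l1) as [_ [F1 _]].
    { unfold c. rewrite l4, rs. reflexivity. }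
    { unfold c. rewrite l4. reflexivity. }
    rewrite F1.
    assert (hc2 : setmul (D x) (D (g_mul x y)) (Fw x y c ** c)).
    { apply T_iff in hc. apply T_iff. destruct hc as [u1 u2]. split; apply (D_ideal (Fw x y c)); auto. }
    rewrite (proj2 (w_unit x y) w' hw' _ hc2).
    rewrite (@Fw_ext x y (Fw x y c ** c) c). rewrite Fc. unfold c. rewrite l3. reflexivity.
    apply (cl_e_same hA). apply Fw_ea; auto.
  -
    intros x a ha. destruct (proj1 (Dom_iff x a) ha) as [t [k1 k2]].
    destruct (ea_surj a) as [h [hh e]].
    assert (T1 : setmul (D g_one) (D (g_mul g_one x)) a) by (apply Tmk; [apply D_one| rewrite g_mul1l; auto]).
    assert (T2 : setmul (D x) (D (g_mul x g_one)) a) by (apply Tmk; [auto| rewrite g_mul1r; auto]).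
    assert (qt1 : q t = g_mul g_one x) by (rewrite g_mul1l; auto).
    assert (rh : alpha (h ** h^-1) = a ** a^-1) by (rewrite (idem_inv hh), hh; auto).
    assert (qt2 : q t = g_mul x g_one) by (rewrite g_mul1r; auto).
    destruct (Fw_val T1 (q_idem hq hh) qt1 rh k2) as [E1 [F1 F2]].
    destruct (Fw_val T2 k1 qt2 k2 k2) as [E2 [F3 F4]].
    rewrite (idem_inv hh), (f_idem_l _ hh), (r_ht t hh), is_assoc, hh, (al_mul hh (idem_rr t)), e, k2,
      (idem_rr a) in E1.
    rewrite (proj1 (hsieb t (idem_ll t))), conj_ll, k2 in E2.
    rewrite F1, F2, F3, F4, E1, E2, inv_l, (cl_ea_r hA). auto.
  -
    intros x y z a ha.
    destruct ha as [b [c [hb [hc E]]]]. apply T_iff in hb. destruct hb as [hb1 hb2].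
    assert (ha1 : D (g_inv x) a) by (rewrite E; exact (proj1 (D_ideal c hb1))).
    assert (ha2 : D y a) by (rewrite E; exact (proj1 (D_ideal c hb2))).
    assert (ha3 : D (g_mul y z) a) by (rewrite E; exact (proj2 (D_ideal b hc))).
    clear b c hb1 hb2 hc E.
    destruct (theta_D ha1) as [p [k1 [k2 [k3 k4]]]].
    destruct (proj1 (Dom_iff _ a) ha2) as [u [l1 l2]].
    destruct (proj1 (Dom_iff _ a) ha3) as [v [m1 m2]].
    assert (up : u ** u^-1 = p^-1 ** p) by (apply al_inj; try apply idem_rr; try apply idem_ll; congruence).
    assert (vp : v ** v^-1 = p^-1 ** p) by (apply al_inj; try apply idem_rr; try apply idem_ll; congruence).
    assert (Tyz : setmul (D y) (D (g_mul y z)) a) by (apply Tmk; auto).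
    destruct (Fw_val Tyz l1 m1 l2 m2) as [Fyz [_ Syz]].
    rewrite Syz, Fyz. set (phi := f u (u^-1 ** v)).
    assert (ephi : phi ** phi^-1 = a ** a^-1).
    { unfold phi. rewrite <- Fyz. apply Fw_ea; auto. }
    assert (haphi : D (g_inv x) (a ** phi)) by (exact (proj1 (D_ideal phi ha1))).
    assert (eaphi : (a ** phi) ** (a ** phi)^-1 = a ** a^-1) by (apply (cl_e_same hA); auto).
    rewrite (theta_gen (s := p) (a := a ** phi)); auto.
    2: { rewrite eaphi, k2. apply (idem_rr a). }
    rewrite k3. rewrite (lam_endo p).
    set (c1 := lam p a).
    assert (ec1 : c1 ** c1^-1 = alpha (p ** p^-1)) by (unfold c1; rewrite <- k3; auto).
    assert (ephi2 : lam p phi ** (lam p phi)^-1 = alpha (p ** p^-1)).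
    { rewrite lam_ea, ephi, <- k2, h2 by apply idem_ll. rewrite conj_ll. auto. }
    assert (ec : (c1 ** lam p phi) ** (c1 ** lam p phi)^-1 = alpha (p ** p^-1)).
    { rewrite (cl_e_mul hA), ec1, ephi2. apply al_rr. }
    assert (qpv : q (p ** v) = g_mul x (g_mul y z)) by (rewrite (q_hom hq), k1, m1; auto).
    assert (rpv : alpha ((p ** v) ** (p ** v)^-1) = alpha (p ** p^-1)) by (rewrite r_pu; auto).
    assert (qpu : q (p ** u) = g_mul x y) by (rewrite (q_hom hq), k1, l1; auto).
    assert (rpu : alpha ((p ** u) ** (p ** u)^-1) = alpha (p ** p^-1)) by (rewrite r_pu; auto).
    assert (pv : p ** (p^-1 ** (p ** v)) = p ** v) by (rewrite is_assoc, is_assoc, inv_l; reflexivity).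
    assert (TL : setmul (D x) (D (g_mul x (g_mul y z))) (c1 ** lam p phi)).
    { apply Tmk; apply Dom_iff. exists p. split; auto. exists (p ** v). split; auto. congruence. }
    destruct (Fw_val TL k1 qpv (eq_sym ec) (eq_trans rpv (eq_sym ec))) as [FL [_ SL]].
    rewrite SL, FL.
    assert (fpv : f p (p^-1 ** (p ** v)) = f p v).
    { rewrite is_assoc, f_mid by apply idem_ll. rewrite is_assoc, inv_l. reflexivity. }
    rewrite fpv.
    assert (T1 : setmul (D x) (D (g_mul x y)) c1).
    { apply Tmk; apply Dom_iff. exists p. split; auto. exists (p ** u). split; auto. congruence. }
    destruct (Fw_val T1 k1 qpu (eq_sym ec1) (eq_trans rpu (eq_sym ec1))) as [F1 [_ S1]].
    rewrite S1, F1.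
    assert (fpu : f p (p^-1 ** (p ** u)) = f p u).
    { rewrite is_assoc, f_mid by apply idem_ll. rewrite is_assoc, inv_l. reflexivity. }
    rewrite fpu.
    assert (efpu : f p u ** (f p u)^-1 = alpha (p ** p^-1)) by (rewrite f_ea; auto).
    assert (ec2 : (c1 ** f p u) ** (c1 ** f p u)^-1 = alpha (p ** p^-1)).
    { rewrite (cl_e_mul hA), ec1, efpu. apply al_rr. }
    assert (qpv' : q (p ** v) = g_mul (g_mul x y) z) by (rewrite qpv, g_assoc; auto).
    assert (T2 : setmul (D (g_mul x y)) (D (g_mul (g_mul x y) z)) (c1 ** f p u)).
    { apply Tmk; apply Dom_iff. exists (p ** u). split; auto. congruence.
      exists (p ** v). split; auto. congruence. }
    destruct (Fw_val T2 qpu qpv' (eq_trans rpu (eq_sym ec2)) (eq_trans rpv (eq_sym ec2))) as [F2 [_ S2]].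
    rewrite S2, F2.
    assert (uv : (p ** u)^-1 ** (p ** v) = u^-1 ** v).
    { rewrite inv_mul. regroup (u^-1 ** (p^-1 ** p) ** v). rewrite <- vp. regroup (u^-1 ** (v ** v^-1 ** v)). rewrite inv_l. reflexivity. }
    rewrite uv.
    pose proof (h5 p u (u^-1 ** v)) as cc.
    assert (uuv : u ** (u^-1 ** v) = v) by (apply rr_st; congruence).
    rewrite uuv in cc. fold phi in cc.
    rewrite <- is_assoc, cc. rewrite ?is_assoc. reflexivity.
Qed.

Variable alpha_inv : A -> S.
Hypothesis halpha_inv : forall g : A, idem g -> idem (alpha_inv g) /\ alpha (alpha_inv g) = g.

Lemma ai_ea a : idem (alpha_inv (a ** a^-1)) /\ alpha (alpha_inv (a ** a^-1)) = a ** a^-1.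
Proof. apply halpha_inv, idem_rr. Qed.

Lemma theta_one a : theta g_one a = a.
Proof. destruct tpa as [_ [_ [_ [_ [_ [_ [k _]]]]]]]. apply k. Qed.

Lemma w_one_snd x a : D x a -> snd (w g_one x) a = a.
Proof. destruct tpa as [_ [_ [_ [_ [_ [_ [_ [_ [_ [k _]]]]]]]]]]. intro ha. apply (k x a ha). Qed.

Lemma idem_self e : idem e -> e ** e^-1 = e.
Proof. intro he. rewrite (idem_inv he). exact he. Qed.

Lemma ext : equivalent_extensions
    (cpL_car alpha) (cpL_rel lam f) (cpL_i alpha_inv) (cpL_j q)
    (cpT_car (Dom q alpha)) (cpT_rel (Dom q alpha) theta w) (@cpT_i A H) (@cpT_j A H).
Proof.
  unfold equivalent_extensions, is_extension, cpL_car, cpL_rel, cpL_i, cpL_j, cpT_car, cpT_rel, cpT_i, cpT_j.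
  split; [|split].
  - split; [|split; [|split; [|split; [|split]]]].
    + intro a. simpl. destruct (ai_ea a) as [i1 i2]. rewrite idem_self, i2 by auto. reflexivity.
    + intros a b. unfold cpL_mul. simpl.
      destruct (ai_ea a) as [ia ea_]. destruct (ai_ea b) as [ib eb].
      set (g := alpha_inv (a ** a^-1)) in *. set (h := alpha_inv (b ** b^-1)) in *.
      f_equal.
      * rewrite h1, (proj1 (hsieb g ib)), (idem_inv ia) by auto.
        assert (ghg : g ** h ** g = g ** h).
        { rewrite <- is_assoc, (idem_comm ib ia), is_assoc, ia. reflexivity. }
        rewrite ghg, al_mul, ea_, eb by auto.
        rewrite <- (cl_e_mul hA). symmetry. regroup ((a ** (a ** a^-1)) ** b ** ((a ** b) ** (a ** b)^-1)).
        rewrite (cl_ea_r hA a). apply (cl_ea_r hA).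
      * apply al_inj. apply (proj1 (ai_ea (a ** b))). apply idem_mul; auto.
        rewrite (proj2 (ai_ea (a ** b))), al_mul, ea_, eb by auto. apply (cl_e_mul hA).
    + intros a b e. apply (f_equal fst) in e. exact e.
    + intros u v r _ _ ->. simpl. apply (q_hom hq).
    + intro x. destruct (proj1 (proj2 hq) x) as [s k]. exists (alpha (s ** s^-1), s). simpl.
      split; auto. apply (cl_idem_e (al_rr s)).
    + intros [a s] hu. simpl in *. split.
      * intro k. apply (Eu hS hq) in k. exists a. unfold cpL_i. f_equal. symmetry.
        apply al_inj; auto. apply ai_ea. rewrite (proj2 (ai_ea a)), hu, (idem_self k). reflexivity.
      * intros [a0 e]. injection e as e1 e2. rewrite e2. apply (q_idem hq). apply ai_ea.
  - split; [|split; [|split; [|split; [|split]]]].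
    + intro a. apply D_one.
    + intros a b. simpl. exists a. split. rewrite g_inv_one. apply D_one. split. apply theta_one.
      rewrite theta_one, w_one_snd, g_mul1l. reflexivity. apply D_one.
    + intros a b e. apply (f_equal fst) in e. exact e.
    + intros u v r _ _ [a' [_ [_ ->]]]. reflexivity.
    + intro x. destruct (D_nonempty x) as [a ha]. exists (a, x). auto.
    + intros [a x] hu. simpl. split.
      * intro k. exists a. rewrite k. reflexivity.
      * intros [a0 e]. injection e. auto.
  - exists (fun (p : A * S) => (fst p, q (snd p))). split; [|split; [|split; [|split; [|split]]]].
    + intros [a s] hu. simpl in *. apply Dom_iff. exists s. auto.
    + intros [a s] [b t] hu hv e. simpl in *. injection e as e1 e2. subst b. f_equal.
      apply (uniq_r hS hq); auto. apply al_inj; try apply idem_rr. congruence.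
    + intros [a x] hu. simpl in *. destruct (proj1 (Dom_iff x a) hu) as [s [k1 k2]].
      exists (a, s). simpl. split; auto. rewrite k1. reflexivity.
    + intros [a s] [b t] r hu hv ->. simpl in *. unfold cpL_mul. simpl.
      assert (ha : D (q s) a) by (apply Dom_iff; exists s; auto).
      destruct (theta_surj ha) as [a' [ha' ta']].
      destruct (theta_D ha') as [s' [k1 [k2 [k3 k4]]]].
      assert (ss : s' = s).
      { apply (uniq_r hS hq); auto. apply al_inj; try apply idem_rr. congruence. }
      subst s'. exists a'. split; auto. split; auto.
      assert (tab : theta (q s) (a' ** b) = a ** lam s b).
      { rewrite (theta_gen (s := s)); auto. rewrite (lam_endo s), <- k3, ta'. reflexivity.
        rewrite (cl_e_mul hA), <- k2. regroup (alpha (s^-1 ** s) ** ((b ** b^-1) ** alpha (s^-1 ** s))).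
        rewrite (idem_comm (idem_rr b) (al_ll s)). regroup ((alpha (s^-1 ** s) ** alpha (s^-1 ** s)) ** (b ** b^-1)).
        rewrite (al_ll s). reflexivity. }
      rewrite tab. set (c := a ** lam s b).
      set (s0 := s ** (t ** t^-1)). set (t0 := s ** t).
      assert (q0 : q s0 = q s) by (unfold s0; rewrite (q_hom hq), (q_idem hq (idem_rr t)), g_mul1r; auto).
      assert (qt0 : q t0 = g_mul (q s) (q t)) by apply (q_hom hq).
      assert (ec : c ** c^-1 = alpha (s ** (t ** t^-1) ** s^-1)).
      { unfold c. rewrite (cl_e_mul hA), lam_ea, hv, h2, hu by apply idem_rr.
        rewrite <- al_mul by (try apply idem_rr; apply conj_idem, idem_rr).
        f_equal. regroup ((s ** s^-1 ** s) ** (t ** t^-1) ** s^-1). rewrite inv_l. reflexivity. }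
      assert (r0 : alpha (s0 ** s0^-1) = c ** c^-1) by (unfold s0; rewrite r_tg, ec by apply idem_rr; reflexivity).
      assert (rt0 : alpha (t0 ** t0^-1) = c ** c^-1) by (unfold t0; rewrite r_st, ec; reflexivity).
      assert (hc : setmul (D (q s)) (D (g_mul (q s) (q t))) c).
      { apply Tmk; apply Dom_iff. exists s0; auto. exists t0; auto. }
      destruct (Fw_val hc q0 qt0 r0 rt0) as [F [_ Sn]].
      rewrite Sn, F. f_equal. f_equal. 2: { apply (q_hom hq). }
      symmetry. unfold s0, t0.
      assert (hr : idem (t ** t^-1)) by apply idem_rr.
      replace ((s ** (t ** t^-1))^-1 ** (s ** t)) with ((t ** t^-1) ** ((s^-1 ** s) ** t))
        by (rewrite inv_mul, (idem_inv hr); rewrite ?is_assoc; reflexivity).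
      rewrite <- f_mid by auto.
      replace ((t ** t^-1) ** ((t ** t^-1) ** ((s^-1 ** s) ** t))) with ((s^-1 ** s) ** t).
      2: { symmetry. regroup ((t ** t^-1 ** (t ** t^-1)) ** (s^-1 ** s) ** t). rewrite hr, (idem_comm hr (idem_ll s)).
           regroup ((s^-1 ** s) ** (t ** t^-1 ** t)). rewrite inv_l. reflexivity. }
      rewrite f_mid by apply idem_ll. rewrite is_assoc, inv_l. reflexivity.
    + intro a. simpl. f_equal. apply (q_idem hq). apply ai_ea.
    + intros u _. reflexivity.
Qed.

End TM.

Unset Implicit Arguments.
Set Strict Implicit.

Theorem proposition6p11
  (S A : InvSemigroup) (H : Group) (q : S -> H)
  (hS : E_unitary S) (hA : semilattice_of_groups A)
  (hq : min_group_quotient q)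
  (alpha : S -> A) (lam : S -> A -> A) (f : S -> S -> A)
  (hLam : sieben_twisted_module alpha lam f)
  (theta : H -> A -> A)
  (htheta : forall x a, Dom q alpha (g_inv x) a ->
     forall s, q s = x -> alpha (s^-1 ** s) = a ** a^-1 -> theta x a = lam s a)
  (w : H -> H -> (A -> A) * (A -> A))
  (hw : forall x y a,
     setmul (Dom q alpha x) (Dom q alpha (g_mul x y)) a ->
     forall s t, q s = x -> q t = g_mul x y ->
       alpha (s ** s^-1) = a ** a^-1 -> alpha (t ** t^-1) = a ** a^-1 ->
       fst (w x y) a = f s (s^-1 ** t) ** a /\
       snd (w x y) a = a ** f s (s^-1 ** t))
  (alpha_inv : A -> S)
  (halpha_inv : forall g : A, idem g -> idem (alpha_inv g) /\ alpha (alpha_inv g) = g) :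
  twisted_partial_action (Dom q alpha) theta w /\
  equivalent_extensions
    (cpL_car alpha) (cpL_rel lam f) (cpL_i alpha_inv) (cpL_j q)
    (cpT_car (Dom q alpha)) (cpT_rel (Dom q alpha) theta w) (@cpT_i A H) (@cpT_j A H).
Proof.
  destruct hLam as [[[ai [am [aj asu]]] [hri [hfA [h1 [h2 [h3 [_ h5]]]]]]] hsb].
  assert (le : forall s, endo (lam s)) by (intro s; exact (proj1 (hri s))).
  split.
  - eapply tpa; eauto.
  - eapply ext; eauto.
Qed.
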